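(* Define the relation $\succeq^6$ on $\mathcal{A}$ by $\mathbf{A}\succeq^6\mathbf{B}\iff\mu(\mathbf{A})^n\le\mu(\mathbf{B})^m$, where $n$ is the size of $\mathbf{A}$, $m$ is the size of $\mathbf{B}$, and for $\mathbf{A}=[a_{ij}]$ of size $n$, $\mu(\mathbf{A})=\max_{1\le i<j<k\le n}\max\{a_{ij}a_{jk}/a_{ik},\ a_{ik}/(a_{ij}a_{jk})\}$. Then $\succeq^6$ is an inconsistency ranking that satisfies PR, IIP, HTE, SI and MON, but does not satisfy RED.
   Context: A pairwise comparison matrix of size $n$ is a matrix $\mathbf{A}=[a_{ij}]\in\mathbb{R}^{n\times n}$ with all entries positive and $a_{ji}=1/a_{ij}$ for all $i,j$. Let $\mathcal{A}$ denote the set of all pairwise comparison matrices of all sizes $n\ge 3$. For $\mathbf{A}\in\mathcal{A}$ of size $n$ and $3\le m\le n$, a submatrix of $\mathbf{A}$ is a matrix $\mathbf{B}=[b_{ij}]$ of size $m$ with $b_{ij}=a_{\sigma(i)\sigma(j)}$ for some strictly increasing map $\sigma:\{1,\dots,m\}\to\{1,\dots,n\}$. A triad is a pairwise comparison matrix of size $3$; a triad of $\mathbf{A}$ is a submatrix of $\mathbf{A}$ of size $3$ (when $n=3$, $\mathbf{A}$ is its own unique triad). A triad $\mathbf{T}$ is written $\mathbf{T}=(t_1;t_2;t_3)$, meaning $t_{12}=t_1$, $t_{13}=t_2$, $t_{23}=t_3$ (the remaining entries are determined by reciprocity); $\mathbf{T}^\top$ denotes its transpose, i.e. the triad $(1/t_1;1/t_2;1/t_3)$.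 An inconsistency ranking is a complete and transitive binary relation $\succeq$ on $\mathcal{A}$; $\mathbf{A}\sim\mathbf{B}$ means $\mathbf{A}\succeq\mathbf{B}$ and $\mathbf{B}\succeq\mathbf{A}$; $\mathbf{A}\preceq\mathbf{B}$ means $\mathbf{B}\succeq\mathbf{A}$. Properties of an inconsistency ranking $\succeq$: (PR) for all $s_2,t_2\ge 1$: $(1;s_2;1)\succeq(1;t_2;1)\iff s_2\le t_2$. (IIP) $\mathbf{T}\sim\mathbf{T}^\top$ for every triad $\mathbf{T}$. (HTE) $(1;t_2;t_3)\sim(1;t_2/t_3;1)$ for all $t_2,t_3>0$. (SI) $(t_1;t_2;t_3)\sim(kt_1;k^2t_2;kt_3)$ for all $t_1,t_2,t_3>0$ and all $k>0$. (MON) $\mathbf{A}\preceq\mathbf{T}$ for every $\mathbf{A}\in\mathcal{A}$ and every triad $\mathbf{T}$ of $\mathbf{A}$. (RED) every $\mathbf{A}\in\mathcal{A}$ has a triad $\mathbf{T}$ with $\mathbf{A}\sim\mathbf{T}$. *)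

(* Defs.v *)
From Stdlib Require Import Reals Lra Lia List.
Import ListNotations.
Open Scope R_scope.

(* A pairwise comparison matrix of size n >= 3.  Entries are indexed
   by 0..n-1 (so a_{ij} of the paper is pc_a A (i-1) (j-1)).  Entries
   outside the index range are normalised to 1, so that each matrix has
   a unique representative (up to proof irrelevance). *)
Record PCM : Type := mkPCM {
  pc_n : nat;
  pc_a : nat -> nat -> R;
  pc_n3 : (3 <= pc_n)%nat;
  pc_pos : forall i j, (i < pc_n)%nat -> (j < pc_n)%nat -> 0 < pc_a i j;
  pc_rec : forall i j, (i < pc_n)%nat -> (j < pc_n)%nat -> pc_a j i = / pc_a i j;
  pc_out : forall i j, (pc_n <= i)%nat \/ (pc_n <= j)%nat -> pc_a i j = 1
}.

Definition triple_incons (A : PCM) (i j k : nat) : R :=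
  Rmax (pc_a A i j * pc_a A j k / pc_a A i k)
       (pc_a A i k / (pc_a A i j * pc_a A j k)).

Definition triple_values (A : PCM) : list R :=
  let n := pc_n A in
  flat_map (fun i =>
    flat_map (fun j =>
      map (fun k => triple_incons A i j k) (seq (S j) (n - S j)))
      (seq (S i) (n - S i)))
    (seq 0 n).

(* mu(A) = max over i<j<k of triple_incons (the list is non-empty since
   n >= 3, and every value is >= 1, so the seed 1 is harmless). *)
Definition mu (A : PCM) : R := fold_right Rmax 1 (triple_values A).

Definition ge6 (A B : PCM) : Prop := mu A ^ pc_n A <= mu B ^ pc_n B.

Definition equiv_r (ge : PCM -> PCM -> Prop) (A B : PCM) : Prop := ge A B /\ ge B A.

Definition inconsistency_ranking (ge : PCM -> PCM -> Prop) : Prop :=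
  (forall A B, ge A B \/ ge B A) /\
  (forall A B C, ge A B -> ge B C -> ge A C).

Definition is_triad (T : PCM) (t1 t2 t3 : R) : Prop :=
  pc_n T = 3%nat /\ pc_a T 0 1 = t1 /\ pc_a T 0 2 = t2 /\ pc_a T 1 2 = t3.

Definition triad_of (T A : PCM) : Prop :=
  pc_n T = 3%nat /\
  exists i j k : nat, (i < j)%nat /\ (j < k)%nat /\ (k < pc_n A)%nat /\
    forall p q : nat, (p < 3)%nat -> (q < 3)%nat ->
      pc_a T p q = pc_a A (nth p [i; j; k] 0%nat) (nth q [i; j; k] 0%nat).

Definition PR (ge : PCM -> PCM -> Prop) : Prop :=
  forall (s2 t2 : R) (S T : PCM), 1 <= s2 -> 1 <= t2 ->
    is_triad S 1 s2 1 -> is_triad T 1 t2 1 -> (ge S T <-> s2 <= t2).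

Definition IIP (ge : PCM -> PCM -> Prop) : Prop :=
  forall (t1 t2 t3 : R) (T T' : PCM), 0 < t1 -> 0 < t2 -> 0 < t3 ->
    is_triad T t1 t2 t3 -> is_triad T' (/ t1) (/ t2) (/ t3) -> equiv_r ge T T'.

Definition HTE (ge : PCM -> PCM -> Prop) : Prop :=
  forall (t2 t3 : R) (T T' : PCM), 0 < t2 -> 0 < t3 ->
    is_triad T 1 t2 t3 -> is_triad T' 1 (t2 / t3) 1 -> equiv_r ge T T'.

Definition SI (ge : PCM -> PCM -> Prop) : Prop :=
  forall (t1 t2 t3 k : R) (T T' : PCM), 0 < t1 -> 0 < t2 -> 0 < t3 -> 0 < k ->
    is_triad T t1 t2 t3 -> is_triad T' (k * t1) (k ^ 2 * t2) (k * t3) ->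
    equiv_r ge T T'.

Definition MON (ge : PCM -> PCM -> Prop) : Prop :=
  forall (A T : PCM), triad_of T A -> ge T A.

Definition RED (ge : PCM -> PCM -> Prop) : Prop :=
  forall A : PCM, exists T : PCM, triad_of T A /\ equiv_r ge A T.

(* Main.v *)
Require Import Defs.
From Stdlib Require Import Reals.
From Stdlib Require Import Lra Lia List.
Import ListNotations.
Open Scope R_scope.

Lemma mu3 (A : PCM) : pc_n A = 3%nat -> mu A = Rmax (triple_incons A 0 1 2) 1.
Proof. intro H. unfold mu, triple_values. rewrite H. simpl. reflexivity. Qed.

Lemma fold_ge1 l : 1 <= fold_right Rmax 1 l.
Proof. induction l; simpl. lra. eapply Rle_trans; [exact IHl| apply Rmax_r]. Qed.

Lemma fold_ge l x : In x l -> x <= fold_right Rmax 1 l.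
Proof. induction l; simpl; [tauto|]. intros [<-|H]. apply Rmax_l.
  eapply Rle_trans; [apply IHl; auto| apply Rmax_r]. Qed.

Lemma mu_ge1 A : 1 <= mu A.
Proof. apply fold_ge1. Qed.

Lemma mu_ge A i j k : (i < j)%nat -> (j < k)%nat -> (k < pc_n A)%nat ->
  triple_incons A i j k <= mu A.
Proof. intros. apply fold_ge. unfold triple_values.
  apply in_flat_map. exists i. split. apply in_seq. lia.
  apply in_flat_map. exists j. split. apply in_seq. lia.
  apply in_map_iff. exists k. split. auto. apply in_seq. lia. Qed.

Lemma triad_mu T A : triad_of T A -> exists i j k, (i < j)%nat /\ (j < k)%nat /\
  (k < pc_n A)%nat /\ mu T = Rmax (triple_incons A i j k) 1.
Proof. intros [H3 [i [j [k [h1 [h2 [h3 H]]]]]]]. exists i, j, k. repeat split; auto.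
  rewrite mu3; auto. unfold triple_incons.
  rewrite (H 0%nat 1%nat), (H 1%nat 2%nat), (H 0%nat 2%nat) by lia. reflexivity. Qed.

Lemma triad_le T A : triad_of T A -> 1 <= mu T <= mu A.
Proof. intros HT. destruct (triad_mu T A HT) as [i [j [k [? [? [? ->]]]]]].
  split. apply Rmax_r. apply Rmax_lub. apply mu_ge; auto. apply mu_ge1. Qed.

Lemma eq_ge A B : pc_n A = pc_n B -> mu A = mu B -> equiv_r ge6 A B.
Proof. intros H1 H2. unfold equiv_r, ge6. rewrite H1, H2. split; lra. Qed.

Lemma mu_triad T t1 t2 t3 : is_triad T t1 t2 t3 ->
  mu T = Rmax (Rmax (t1 * t3 / t2) (t2 / (t1 * t3))) 1.
Proof. intros [H [a [b c]]]. rewrite mu3; auto. unfold triple_incons. rewrite a, b, c. reflexivity. Qed.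

Lemma mu_pr T s : 1 <= s -> is_triad T 1 s 1 -> mu T = s.
Proof. intros Hs HT. rewrite (mu_triad _ _ _ _ HT).
  replace (1 * 1 / s) with (/ s) by (field; lra).
  replace (s / (1 * 1)) with s by (field; lra).
  assert (/ s <= 1). { rewrite <- Rinv_1. apply Rinv_le_contravar; lra. }
  rewrite (Rmax_right (/ s) s) by lra. rewrite Rmax_left; lra. Qed.

Definition a4 (i j : nat) : R :=
  if (Nat.eqb i 0 && Nat.eqb j 2)%bool then 2
  else if (Nat.eqb i 2 && Nat.eqb j 0)%bool then / 2 else 1.

Lemma a4_pos i j : 0 < a4 i j.
Proof. unfold a4. destruct (_ && _)%bool; [lra|]. destruct (_ && _)%bool; lra. Qed.

Lemma a4_rec i j : a4 j i = / a4 i j.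
Proof. unfold a4. destruct (Nat.eqb_spec i 0), (Nat.eqb_spec j 2), (Nat.eqb_spec i 2),
  (Nat.eqb_spec j 0); subst; simpl; try lia; try (rewrite Rinv_inv; auto); try (rewrite Rinv_1; auto).
  all: try discriminate.
  all: repeat match goal with |- context [Nat.eqb ?a ?b] => destruct (Nat.eqb_spec a b); simpl end;
    try lia; try (rewrite Rinv_inv; auto); try (rewrite Rinv_1; auto); reflexivity. Qed.

Lemma a4_out i j : (4 <= i)%nat \/ (4 <= j)%nat -> a4 i j = 1.
Proof. intros H. unfold a4. destruct (Nat.eqb_spec i 0), (Nat.eqb_spec j 2), (Nat.eqb_spec i 2),
  (Nat.eqb_spec j 0); simpl; auto; lia. Qed.

Definition A4 : PCM := mkPCM 4 a4 ltac:(lia) (fun i j _ _ => a4_pos i j)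
  (fun i j _ _ => a4_rec i j) a4_out.

Theorem mainTheorem7 :
  inconsistency_ranking ge6 /\ PR ge6 /\ IIP ge6 /\ HTE ge6 /\ SI ge6 /\
  MON ge6 /\ ~ RED ge6.
Proof.
  split; [|split; [|split; [|split; [|split; [|split]]]]].
  - unfold ge6; split. intros A B. destruct (Rle_dec (mu A ^ pc_n A) (mu B ^ pc_n B)); [left|right]; lra.
    intros A B C; lra.
  - intros s t S T hs ht HS HT. unfold ge6.
    rewrite (mu_pr S s), (mu_pr T t) by auto.
    rewrite (proj1 HS), (proj1 HT). split; intro H.
    + destruct (Rle_dec s t); auto. exfalso.
      assert (t ^ 3 < s ^ 3). { simpl. assert (t < s) by lra. assert (t*t < s*s) by nra. assert (t*(t*t) < s*(s*s)) by nra. lra. } lra.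
    + apply pow_incr; lra.
  - intros t1 t2 t3 T T' h1 h2 h3 HT HT'. apply eq_ge.
    rewrite (proj1 HT), (proj1 HT'); auto.
    rewrite (mu_triad _ _ _ _ HT), (mu_triad _ _ _ _ HT').
    replace (/ t1 * / t3 / / t2) with (t2 / (t1 * t3)) by (field; lra).
    replace (/ t2 / (/ t1 * / t3)) with (t1 * t3 / t2) by (field; lra).
    rewrite (Rmax_comm (t2 / _)). reflexivity.
  - intros t2 t3 T T' h2 h3 HT HT'. apply eq_ge.
    rewrite (proj1 HT), (proj1 HT'); auto.
    rewrite (mu_triad _ _ _ _ HT), (mu_triad _ _ _ _ HT').
    replace (1 * t3 / t2) with (1 * 1 / (t2 / t3)) by (field; lra).
    replace (t2 / (1 * t3)) with (t2 / t3 / (1 * 1)) by (field; lra). reflexivity.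
  - intros t1 t2 t3 k T T' h1 h2 h3 hk HT HT'. apply eq_ge.
    rewrite (proj1 HT), (proj1 HT'); auto.
    rewrite (mu_triad _ _ _ _ HT), (mu_triad _ _ _ _ HT').
    replace (k * t1 * (k * t3) / (k ^ 2 * t2)) with (t1 * t3 / t2) by (field; lra).
    replace (k ^ 2 * t2 / (k * t1 * (k * t3))) with (t2 / (t1 * t3)) by (field; lra).
    reflexivity.
  - intros A T HT. unfold ge6. pose proof (triad_le T A HT).
    destruct HT as [-> [i [j [k [? [? [? _]]]]]]].
    apply Rle_trans with (mu A ^ 3). apply pow_incr; lra.
    apply Rle_pow. apply mu_ge1. lia.
  - intros HR. destruct (HR A4) as [T [HT [HA _]]].
    pose proof (triad_le T A4 HT). unfold ge6 in HA.
    destruct HT as [H3 _]. rewrite H3 in HA. simpl pc_n in HA.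
    assert (2 <= mu A4).
    { eapply Rle_trans; [|apply (mu_ge A4 0 1 2); simpl; lia].
      unfold triple_incons. simpl pc_a. unfold a4. simpl.
      eapply Rle_trans; [|apply Rmax_r]. lra. }
    assert (mu T ^ 3 <= mu A4 ^ 3) by (apply pow_incr; lra).
    assert (mu A4 ^ 3 < mu A4 ^ 4) by (apply Rlt_pow; [lra|lia]). lra.
Qed.
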